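(* Let $(X,\mathcal T,P,\leq,\{\sigma_x:x\in X\})$ be a typed topological space with $X$ finite, let $p\in P$, and assume $\sigma$ has least $p$-neighborhood. Let $y\neq z\in X$ satisfy $z\notin p\vdash tr(\{y\})$ and $y\notin p\vdash tr(\{z\})$, and let $S$ be the $p$-surgery on $(z,y)$. Then (1) $p\vdash_S tr(\{y\})=p\vdash tr(\{y\})$; (2) $p\vdash_S tr(\{z\})\cap p\vdash_S tr(\{y\})=\emptyset$; and (3) $p\vdash_S tr(\{y\})\cup p\vdash_S tr(\{z\})=p\vdash tr(\{y\})\cup p\vdash tr(\{z\})$.
   Context: A typed topological space $(X,\mathcal T,P,\leq,\{\sigma_x:x\in X\})$ consists of a topological space $(X,\mathcal T)$, a partially ordered set $(P,\leq)$ of types, and for each $x\in X$ a partial function $\sigma_x:\{O\in\mathcal T:x\in O\}\to P$ such that for all $U,V$ in its domain, $\sigma_x(U)\leq\sigma_x(V)$ iff $U\subseteq V$. $U$ is a type-$p$ neighborhood of $x$ if $U$ is in the domain of $\sigma_x$ and $\sigma_x(U)=p$. $\sigma$ has least $p$-neighborhood if every $x$ has a type-$p$ neighborhood $p\vdash U_{min}(x)$ contained in all its type-$p$ neighborhoods; then $x$ is a $p$-accumulation point of $A$ iff $p\vdash U_{min}(x)\cap A\neq\emptyset$. $p\vdash CL_1(A)=A\cup\{p\text{-accumulation points of }A\}$, $p\vdash CL_n(A)=p\vdash CL_1(p\vdash CL_{n-1}(A))$, $p\vdash tr(A)=\bigcup_{n\ge1}p\vdash CL_n(A)$. The $p$-surgery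 $S$ on $(z,y)$ (defined when $z\notin p\vdash tr(\{y\})$ and $y\notin p\vdash tr(\{z\})$) modifies, for each $w\in p\vdash tr(\{y\})\cap p\vdash tr(\{z\})$, the least neighborhood to $p\vdash_S U_{min}(w):=p\vdash U_{min}(w)\setminus\big(p\vdash tr(\{z\})\setminus p\vdash tr(\{y\})\big)$, leaving all other least $p$-neighborhoods unchanged. In the modified space, a point $x$ is a $p$-accumulation point of $A$ iff its (possibly modified) least $p$-neighborhood meets $A$, and $p\vdash_S CL_n$, $p\vdash_S tr$ denote the closures computed in this modified space. *)

(* Defs.v *)
From mathcomp Require Import all_boot all_order.
Set Implicit Arguments. Unset Strict Implicit. Unset Printing Implicit Defensive.
Import Order.TTheory.
Local Open Scope order_scope.

Definition is_topology (X : finType) (T : {set {set X}}) : Prop :=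
  [/\ set0 \in T, [set: X] \in T,
      (forall F : {set {set X}}, F \subset T -> \bigcup_(U in F) U \in T) &
      (forall U V, U \in T -> V \in T -> U :&: V \in T)].

Definition is_typed_topology (X : finType) (T : {set {set X}})
    (d : Order.disp_t) (P : porderType d) (sigma : X -> {set X} -> option P) : Prop :=
  is_topology T /\
  forall x : X,
    (forall U q, sigma x U = Some q -> U \in T /\ x \in U) /\
    (forall U V p1 p2, sigma x U = Some p1 -> sigma x V = Some p2 ->
        (p1 <= p2 <-> U \subset V)).

(* Umin x is the least type-p neighborhood of x, for every x
   (so sigma has least p-neighborhood, realized by Umin). *)
Definition least_p_nbhd (X : finType) (d : Order.disp_t) (P : porderType d)
    (sigma : X -> {set X} -> option P) (p : P) (Umin : X -> {set X}) : Prop :=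
  forall x, sigma x (Umin x) = Some p /\
            (forall U, sigma x U = Some p -> Umin x \subset U).

(* Closures w.r.t. a (possibly modified) least-neighborhood assignment,
   given as a relation Nb x v  <->  v belongs to the least p-nbhd of x.
   Subsets of X are predicates X -> Prop. *)
Definition CL1 (X : Type) (Nb : X -> X -> Prop) (A : X -> Prop) : X -> Prop :=
  fun x => A x \/ exists v, Nb x v /\ A v.

(* CLn Nb n A = p |- CL_n(A) for n >= 1 (CLn 0 A = A, so CLn 1 = CL1). *)
Fixpoint CLn (X : Type) (Nb : X -> X -> Prop) (n : nat) (A : X -> Prop) : X -> Prop :=
  match n with
  | 0 => A
  | n'.+1 => CL1 Nb (CLn Nb n' A)
  end.

Definition tr (X : Type) (Nb : X -> X -> Prop) (A : X -> Prop) : X -> Prop :=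
  fun x => exists n, (1 <= n)%N /\ CLn Nb n A x.

Definition sing (X : Type) (a : X) : X -> Prop := fun x => x = a.

Definition nbhd_rel (X : finType) (Umin : X -> {set X}) : X -> X -> Prop :=
  fun x v => v \in Umin x.

(* The p-surgery on (z,y): for w in tr{y} /\ tr{z}, the least neighborhood
   becomes Umin w \ (tr{z} \ tr{y}); otherwise unchanged. *)
Definition surgery_rel (X : finType) (Umin : X -> {set X}) (z y : X) : X -> X -> Prop :=
  let ty := tr (nbhd_rel Umin) (sing y) in
  let tz := tr (nbhd_rel Umin) (sing z) in
  fun w v =>
    ((ty w /\ tz w) -> v \in Umin w /\ ~ (tz v /\ ~ ty v)) /\
    (~ (ty w /\ tz w) -> v \in Umin w).

(* Main.v *)
Require Import Defs.
From mathcomp Require Import all_boot all_order.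
From Stdlib Require Import Classical.

Inductive star (X : Type) (Nb : X -> X -> Prop) (A : X -> Prop) : X -> Prop :=
| st0 x : A x -> star X Nb A x
| st1 x v : Nb x v -> star X Nb A v -> star X Nb A x.
Arguments star {X}.
Arguments st0 {X Nb A}.
Arguments st1 {X Nb A}.
Set Implicit Arguments.

Lemma tr_star (X : Type) (Nb : X -> X -> Prop) (A : X -> Prop) x :
  tr Nb A x <-> star Nb A x.
Proof.
split.
- move=> [n [_ H]]; elim: n x H => [|n IH] x /=; first by apply: st0.
  case=> [H|[v [Hv H]]]; first exact: IH.
  apply: st1 Hv _; exact: IH.
- have H: star Nb A x -> exists n, CLn Nb n A x.
    elim=> [x0 Ax|x0 v Hv _ [n Hn]]; first by exists 0.
    by exists n.+1; right; exists v.
  move=> /H [n Hn]; exists n.+1; split => //; by left.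
Qed.

Lemma star_trans (X : Type) (Nb : X -> X -> Prop) (B : X -> Prop) a w :
  star Nb (sing a) w -> star Nb B a -> star Nb B w.
Proof.
elim=> [x0 ->|x0 v Hv _ IH] // Hb; exact: st1 Hv (IH Hb).
Qed.

Lemma star_mono (X : Type) (N1 N2 : X -> X -> Prop) (A : X -> Prop) w :
  (forall x v, N1 x v -> N2 x v) -> star N1 A w -> star N2 A w.
Proof.
move=> H; elim=> [x0 Ax|x0 v Hv _ IH]; first exact: st0.
exact: st1 (H _ _ Hv) IH.
Qed.

Theorem proposition3p13 (X : finType) (T : {set {set X}})
    (d : Order.disp_t) (P : porderType d) (sigma : X -> {set X} -> option P)
    (p : P) (Umin : X -> {set X}) (y z : X) :
  is_typed_topology T sigma ->
  least_p_nbhd sigma p Umin ->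
  y <> z ->
  ~ tr (nbhd_rel Umin) (sing y) z ->
  ~ tr (nbhd_rel Umin) (sing z) y ->
  (forall w, tr (surgery_rel Umin z y) (sing y) w <-> tr (nbhd_rel Umin) (sing y) w) /\
  (forall w, ~ (tr (surgery_rel Umin z y) (sing z) w /\
                tr (surgery_rel Umin z y) (sing y) w)) /\
  (forall w, (tr (surgery_rel Umin z y) (sing y) w \/ tr (surgery_rel Umin z y) (sing z) w)
             <-> (tr (nbhd_rel Umin) (sing y) w \/ tr (nbhd_rel Umin) (sing z) w)).
Proof.
move=> _ _ _ Hzy _.
set R := nbhd_rel Umin.
set S := surgery_rel Umin z y.
have SR : forall x v, S x v -> R x v.
  move=> x v [H1 H2]; case: (classic (tr R (sing y) x /\ tr R (sing z) x)).
    by move=> /H1 [].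
  by move=> /H2.
have Ty : forall w, tr S (sing y) w <-> tr R (sing y) w.
  move=> w; rewrite !tr_star; split; first exact: star_mono.
  move=> H; have : star R (sing y) w := H.
  elim: H => [x0 Ax _|x0 v Hv Hs IH Hx]; first exact: st0.
  apply: st1 (IH Hs); split; last by [].
  move=> _; split; first exact: Hv.
  move=> [_ HH]; apply: HH; rewrite tr_star; exact: Hs.
have T2 : forall w, ~ (tr S (sing z) w /\ tr S (sing y) w).
  move=> w [Hz Hy]; move: Hy; rewrite Ty; rewrite tr_star in Hz.
  elim: Hz => [x0 -> Hy|x0 v Hv Hs IH Hx].
    exact: Hzy Hy.
  case: (classic (tr R (sing y) v)) => Hvy; first exact: IH.
  have HsR : star R (sing z) v := @star_mono _ S R _ _ SR Hs.
  case: (Hv) => [H1 _]; case: H1 => [|_ []].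
    split; first exact: Hx.
    rewrite tr_star; exact: st1 (SR _ _ Hv) HsR.
  split; last exact: Hvy.
  rewrite tr_star; exact: HsR.
split => //; split => //.
move=> w; split.
  case=> H; [left|right]; move: H; rewrite !tr_star; exact: star_mono.
case=> H; first by left; rewrite Ty.
case: (classic (tr R (sing y) w)) => Hw; first by left; rewrite Ty.
right; move: H Hw; rewrite tr_star => H.
elim: H => [x0 Ax _|x0 v Hv Hs IH Hx]; first by rewrite tr_star; exact: st0.
have Hvy : ~ tr R (sing y) v.
  move=> Hv'; apply: Hx; rewrite tr_star in Hv'; apply/tr_star; exact: (@st1 _ R _ x0 v Hv Hv').
move: (IH Hvy); rewrite !tr_star => Hs'.
apply: st1 Hs'; split; first by move=> [].
by [].
Qed.
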